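(* Let $n\ge 1$ and consider an operational theory that admits a preparation noncontextual hidden variable model. Consider any protocol for $n$-bit parity-oblivious multiplexing in this theory: for each $x\in\{0,1\}^n$ Alice implements a preparation $P_x$, and for each $y\in\{1,\dots,n\}$ Bob implements a binary-outcome measurement $M_y$ and outputs its outcome $b\in\{0,1\}$. Suppose the protocol is parity-oblivious: for every $s\in\mathrm{Par}$, every measurement $M$ of the theory and every outcome $k$ of $M$, $$\sum_{x:\,x\cdot s=0}p(P_x|k,M)=\sum_{x:\,x\cdot s=1}p(P_x|k,M),$$ where $p(P_x|k,M)$ is the posterior probability of $x$ given outcome $k$ of $M$ under the uniform prior on $x$ (equivalently, $\sum_{x:\,x\cdot s=0}p(k|P_x,M)=\sum_{x:\,x\cdot s=1}p(k|P_x,M)$). Then $$p(b=x_y)=\frac{1}{2^n n}\sum_{y=1}^{n}\sum_{x\in\{0,1\}^n}p(b=x_y|P_x,M_y)\le\frac{n+1}{2n}.$$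
   Context: An operational theory specifies a set of preparation procedures $P$ and measurement procedures $M$ and assigns a probability $p(k|P,M)$ to each outcome $k$ of measurement $M$ given preparation $P$; a procedure that chooses a preparation at random from a list with given probabilities and implements it is also a preparation, whose outcome probabilities are the corresponding convex combination. A hidden variable model of the theory assigns to each preparation $P$ a probability distribution $p(\lambda|P)$ over a space of hidden variables $\lambda$ and to each measurement $M$ conditional outcome distributions $p(k|\lambda,M)$ such that $p(k|P,M)=\int d\lambda\, p(k|\lambda,M)p(\lambda|P)$ for all $P,M,k$; a random mixture of preparations is represented by the corresponding mixture of their distributions $p(\lambda|P)$. The model is preparation noncontextual if whenever two preparations $P,P'$ satisfy $p(k|P,M)=p(k|P',M)$ for all measurements $M$ and outcomes $k$, then $p(\lambda|P)=p(\lambda|P')$. For $x,s\in\{0,1\}^n$, $x\cdot s=\bigoplus_i x_is_i$ (sum modulo 2), called the $s$-parity of $x$; $\mathrm{Par}=\{r\in\{0,1\}^n:\sum_i r_i\ge 2\}$. In $n$-bit parity-oblivious multiplexing, Alice's input $x$ is uniform on $\{0,1\}^n$, Bob's input $y$ is uniform on $\{1,\dots,n\}$ (independently), and Bob must output $b=x_y$, the $y$th bit of $x$. *)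

(* Defs.v *)
From HB Require Import structures.
From mathcomp Require Import all_boot all_order all_algebra.
From mathcomp Require Import all_classical all_reals all_analysis.
Set Implicit Arguments. Unset Strict Implicit. Unset Printing Implicit Defensive.
Import Order.TTheory GRing.Theory Num.Theory.
Local Open Scope ring_scope.
Local Open Scope classical_set_scope.

(* An operational theory: preparations, measurements (with finitely many
   outcomes), outcome probabilities p(k|P,M), and closure of the set of
   preparations under random (finite) mixtures: [mix m w Ps] is the procedure
   that picks Ps i with probability w i and implements it. *)
Unset Implicit Arguments.
Record opTheory (R : realType) := OpTheory {
  prep : Type;
  meas : Type;
  outcome : meas -> finType;
  prob : prep -> forall M : meas, outcome M -> R;
  prob_ge0 : forall P M k, 0 <= prob P M k;
  prob_sum1 : forall P M, \sum_(k : outcome M) prob P M k = 1;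
  mix : forall m : nat, ('I_m -> R) -> ('I_m -> prep) -> prep;
  prob_mix : forall m (w : 'I_m -> R) (Ps : 'I_m -> prep) M k,
    (forall i, 0 <= w i) -> \sum_i w i = 1 ->
    prob (mix m w Ps) M k = \sum_i w i * prob (Ps i) M k
}.
Arguments prob {R o} P M k : rename.
Arguments mix {R o} m w Ps : rename.
Arguments outcome {R o} M : rename.
Arguments prep {R} o.
Arguments meas {R} o.
Set Implicit Arguments.

(* A hidden variable model of Th on the hidden-variable space L:
   p(lambda|P) = mu P, p(k|lambda,M) = resp M k lambda. *)
Definition hv_model (R : realType) (Th : opTheory R)
    (d : measure_display) (L : measurableType d)
    (mu : prep Th -> probability L R)
    (resp : forall M : meas Th, outcome M -> L -> R) : Prop :=
  [/\ (forall M k, measurable_fun setT (resp M k)),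
      (forall M k l, 0 <= resp M k l),
      (forall M l, \sum_(k : outcome M) resp M k l = 1),
      (forall P M k,
         ((prob P M k)%:E = \int[mu P]_l (resp M k l)%:E)%E)
    & (forall m (w : 'I_m -> R) (Ps : 'I_m -> prep Th),
         (forall i, 0 <= w i) -> \sum_i w i = 1 ->
         forall A, measurable A ->
           mu (mix m w Ps) A = (\sum_i (w i)%:E * mu (Ps i) A)%E)].

Definition prep_noncontextual (R : realType) (Th : opTheory R)
    (d : measure_display) (L : measurableType d)
    (mu : prep Th -> probability L R) : Prop :=
  forall P P' : prep Th,
    (forall M k, prob P M k = prob P' M k) ->
    forall A, measurable A -> mu P A = mu P' A.

Definition parity (n : nat) (x s : {ffun 'I_n -> bool}) : bool :=
  \big[addb/false]_(i < n) (x i && s i).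

Definition in_Par (n : nat) (s : {ffun 'I_n -> bool}) : bool :=
  (2 <= \sum_(i < n) (s i : nat))%N.

(* p(b = x_y | P_x, M_y), where Bob outputs lab y k for outcome k of M y. *)
Definition succ_prob (R : realType) (Th : opTheory R) (n : nat)
    (P : {ffun 'I_n -> bool} -> prep Th) (M : 'I_n -> meas Th)
    (lab : forall y, outcome (M y) -> bool)
    (x : {ffun 'I_n -> bool}) (y : 'I_n) : R :=
  \sum_(k : outcome (M y) | lab y k == x y) prob (P x) (M y) k.

(* Main.v *)
Require Import Defs.
From HB Require Import structures.
From mathcomp Require Import all_boot all_order all_algebra.
From mathcomp Require Import all_classical all_reals all_analysis.
From mathcomp Require Import measurable_realfun zify ring lra.
Import Order.TTheory GRing.Theory Num.Theory.
Set Implicit Arguments. Unset Strict Implicit. Unset Printing Implicit Defensive.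
Local Open Scope ring_scope.
Local Open Scope classical_set_scope.

Definition Vi (R : realType) (d : measure_display) (L : measurableType d)
  (m : probability L R) (f : L -> R) : R := fine (\int[m]_(l in setT) (f l)%:E)%E.

Definition good (R : realType) (d : measure_display) (L : measurableType d)
  (f : L -> R) := measurable_fun setT f /\ exists C : R, forall l, `|f l| <= C.

Lemma good_int (R : realType) (d : measure_display) (L : measurableType d)
  (m : probability L R) (f : L -> R) : good f -> m.-integrable setT (EFin \o f).
Proof.
move=> [mf [C hC]]; apply: measurable_bounded_integrable => //.
  by have := probability_le1 m measurableT; move/le_lt_trans; apply; rewrite ltry.
exists C; split; first by rewrite num_real.
move=> x Cx y _; apply: le_trans (hC y) _; exact: ltW.
Qed.

Lemma Vi_fin (R : realType) (d : measure_display) (L : measurableType d)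
  (m : probability L R) (f : L -> R) : good f ->
  (\int[m]_(l in setT) (f l)%:E)%E = (Vi m f)%:E.
Proof. by move=> g; rewrite /Vi fineK //; apply: integrable_fin_num => //; exact: good_int. Qed.

Lemma good_scale (R : realType) (d : measure_display) (L : measurableType d)
  (f : L -> R) c : good f -> good (fun l => c * f l).
Proof.
move=> [mf [C hC]]; split; first exact: measurable_realfun.measurable_funM.
exists (`|c| * C) => l; rewrite normrM; apply: ler_wpM2l => //.
Qed.

Lemma Vi_sum (R : realType) (d : measure_display) (L : measurableType d)
  (m : probability L R) (I : Type) (r : seq I) (c : I -> R) (f : I -> L -> R) :
  (forall i, good (f i)) ->
  Vi m (fun l => \sum_(i <- r) c i * f i l) = \sum_(i <- r) c i * Vi m (f i).
Proof.
move=> g; rewrite /Vi.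
under eq_integral do rewrite -sumEFin.
rewrite integral_sum //; last first.
  by move=> i; exact: (good_int m (good_scale (c i) (g i))).
rewrite (eq_bigr (fun i => (c i * Vi m (f i))%:E)); first by rewrite sumEFin.
move=> i _; under eq_integral do rewrite EFinM.
rewrite integralZl //; last exact: good_int.
by rewrite (Vi_fin m (g i)).
Qed.

Lemma Vi_cst (R : realType) (d : measure_display) (L : measurableType d)
  (m : probability L R) (c : R) : Vi m (fun _ => c) = c.
Proof. by rewrite /Vi integral_cst //= probability_setT mule1. Qed.

Lemma Vi_ge0 (R : realType) (d : measure_display) (L : measurableType d)
  (m : probability L R) (f : L -> R) : (forall l, 0 <= f l) -> 0 <= Vi m f.
Proof. by move=> h; rewrite /Vi fine_ge0 // integral_ge0 // => l _; rewrite lee_fin. Qed.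
Lemma mu_fin (R : realType) d (L : measurableType d) (m : probability L R) A :
  measurable A -> m A = (fine (m A))%:E.
Proof.
move=> mA; rewrite fineK //; apply: fin_num_measure => //.
Qed.

Lemma sum_enum (T : finType) (V : nmodType) (F : T -> V) :
  \sum_(i < #|T|) F (enum_val i) = \sum_x F x.
Proof. by rewrite -big_enum_val. Qed.

Lemma mix_sets (R : realType) (Th : opTheory R)
    (d : measure_display) (L : measurableType d)
    (mu : prep Th -> probability L R)
    (resp : forall M : meas Th, outcome M -> L -> R)
    (Hmodel : hv_model mu resp)
    (Hpnc : prep_noncontextual mu)
    (T : finType) (P : T -> prep Th) (A1 A2 : pred T) (x0 : T) (N0 : meas Th) :
    A1 x0 ->
    (forall N k, \sum_(x | A1 x) prob (P x) N k = \sum_(x | A2 x) prob (P x) N k) ->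
    forall A, measurable A ->
      \sum_(x | A1 x) fine (mu (P x) A) = \sum_(x | A2 x) fine (mu (P x) A).
Proof.
move=> Ax0 heq A mA.
case: Hmodel => _ _ _ _ hmix.
pose E : R := \sum_(x | A1 x) 1.
have EE : E = \sum_(x | A2 x) 1.
  rewrite /E.
  transitivity (\sum_(x | A1 x) \sum_k prob (P x) N0 k).
    by apply: eq_bigr => x _; rewrite prob_sum1.
  rewrite exchange_big /=; under eq_bigr do rewrite heq; rewrite -exchange_big /=.
  by apply: eq_bigr => x _; rewrite prob_sum1.
have E0 : 0 < E.
  rewrite /E (bigD1 x0) //= ltr_pwDl // sumr_ge0 //.
pose Ps (i : 'I_#|T|) := P (enum_val i).
pose w (B : pred T) (i : 'I_#|T|) : R := if B (enum_val i) then E^-1 else 0.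
have w0 B i : 0 <= w B i by rewrite /w; case: ifP => // _; rewrite invr_ge0 ltW.
have wsum1 : \sum_i w A1 i = 1.
  rewrite (sum_enum (fun x => if A1 x then E^-1 else 0)) -big_mkcond /=.
  by rewrite sumr_const -[_ *+ _]mulr_natl -sumr_const -/E mulfV // gt_eqF.
have wsum2 : \sum_i w A2 i = 1.
  rewrite (sum_enum (fun x => if A2 x then E^-1 else 0)) -big_mkcond /=.
  by rewrite sumr_const -[_ *+ _]mulr_natl -sumr_const EE mulfV // -EE gt_eqF.
have key B : \sum_i (w B i * fine (mu (Ps i) A)) = E^-1 * \sum_(x | B x) fine (mu (P x) A).
  rewrite (sum_enum (fun x => (if B x then E^-1 else 0) * fine (mu (P x) A))).
  rewrite [in RHS]big_mkcond mulr_sumr; apply: eq_bigr => x _; case: ifP => _ //; by rewrite mul0r mulr0.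
have keyp B N k : \sum_i (w B i * prob (Ps i) N k) = E^-1 * \sum_(x | B x) prob (P x) N k.
  rewrite (sum_enum (fun x => (if B x then E^-1 else 0) * prob (P x) N k)).
  rewrite [in RHS]big_mkcond mulr_sumr; apply: eq_bigr => x _; case: ifP => _ //; by rewrite mul0r mulr0.
have opeq : forall N k, prob (mix _ (w A1) Ps) N k = prob (mix _ (w A2) Ps) N k.
  move=> N k; rewrite !prob_mix // keyp keyp heq //.
have := Hpnc _ _ opeq A mA.
rewrite (hmix _ _ _ (w0 A1) wsum1 A mA) (hmix _ _ _ (w0 A2) wsum2 A mA).
rewrite (eq_bigr (fun i => (w A1 i * fine (mu (Ps i) A))%:E)); last first.
  by move=> i _; rewrite EFinM -mu_fin.
rewrite [X in _ = X -> _](eq_bigr (fun i => (w A2 i * fine (mu (Ps i) A))%:E)); last first.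
  by move=> i _; rewrite EFinM -mu_fin.
rewrite !sumEFin => hh; have h := EFin_inj hh.
have := congr1 (fun z => E * z) h; rewrite /= !key.
by rewrite !mulrA mulfV ?gt_eqF // !mul1r.
Qed.

Lemma good_cst (R : realType) (d : measure_display) (L : measurableType d) (c : R) :
  good (fun _ : L => c).
Proof. by split; [exact: measurable_cst | exists `|c|]. Qed.

Lemma Vi_addc (R : realType) (d : measure_display) (L : measurableType d)
  (m : probability L R) (f : L -> R) c : good f ->
  Vi m (fun l => f l + c) = Vi m f + c.
Proof.
move=> g.
have -> : (fun l => f l + c) = (fun l => \sum_(b <- [:: true; false]) 1 * (if b then f else fun _ => c) l).
  by apply: funext => l; rewrite !big_cons big_nil !mul1r addr0.
rewrite Vi_sum; last by case => //; exact: good_cst.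
by rewrite !big_cons big_nil !mul1r addr0 Vi_cst.
Qed.

Definition mseq (R : realType) (d : measure_display) (L : measurableType d)
  (T : finType) (mx : T -> probability L R) (B : pred T) (k : nat)
  : {measure set L -> \bar R} :=
  match @insub _ (fun k => (k < #|T|)%N) 'I_#|T| k with
  | Some i => if B (enum_val i) then (mx (enum_val i) : {measure set L -> \bar R}) else mzero
  | None => mzero
  end.

Lemma mseqE (R : realType) (d : measure_display) (L : measurableType d)
  (T : finType) (mx : T -> probability L R) (B : pred T) (i : 'I_#|T|) :
  mseq mx B i = if B (enum_val i) then (mx (enum_val i) : {measure set L -> \bar R}) else mzero.
Proof. by rewrite /mseq valK. Qed.

Local Open Scope ereal_scope.
Lemma msum_int (R : realType) (d : measure_display) (L : measurableType d)
  (T : finType) (mx : T -> probability L R) (B : pred T) (f : L -> \bar R) :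
  (forall l, 0 <= f l)%E -> measurable_fun setT f ->
  (\int[msum (mseq mx B) #|T|]_(l in setT) f l = \sum_(x | B x) \int[mx x]_(l in setT) f l)%E.
Proof.
move=> f0 mf; rewrite ge0_integral_measure_sum //.
rewrite (eq_bigr (fun i : 'I_#|T| => if B (enum_val i) then \int[mx (enum_val i)]_(l in setT) f l else 0%E)).
  by rewrite (sum_enum (fun x => if B x then \int[mx x]_(l in setT) f l else 0%E)) -big_mkcond.
move=> i _; rewrite mseqE; case: ifP => // _; exact: integral_measure_zero.
Qed.

Lemma msum_set (R : realType) (d : measure_display) (L : measurableType d)
  (T : finType) (mx : T -> probability L R) (B : pred T) A :
  msum (mseq mx B) #|T| A = \sum_(x | B x) mx x A.
Proof.
rewrite /msum.
rewrite (eq_bigr (fun i : 'I_#|T| => if B (enum_val i) then mx (enum_val i) A else 0%E)).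
  by rewrite (sum_enum (fun x => if B x then mx x A else 0%E)) -big_mkcond.
by move=> i _; rewrite mseqE; case: ifP.
Qed.

Local Close Scope ereal_scope.
Lemma mix_int (R : realType) (d : measure_display) (L : measurableType d)
  (T : finType) (mx : T -> probability L R) (A1 A2 : pred T) :
  (forall A, measurable A ->
      \sum_(x | A1 x) fine (mx x A) = \sum_(x | A2 x) fine (mx x A)) ->
  forall f, good f -> \sum_(x | A1 x) Vi (mx x) f = \sum_(x | A2 x) Vi (mx x) f.
Proof.
move=> hset.
have hpos : forall f, good f -> (forall l, 0 <= f l) ->
    \sum_(x | A1 x) Vi (mx x) f = \sum_(x | A2 x) Vi (mx x) f.
  move=> f g f0; apply: EFin_inj; rewrite -!sumEFin.
  under eq_bigr do rewrite -Vi_fin //.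
  under [RHS]eq_bigr do rewrite -Vi_fin //.
  have mf : measurable_fun setT (fun l => (f l)%:E) by apply/measurable_EFinP; case: g.
  have f0' : forall l, (0 <= (f l)%:E)%E by move=> l; rewrite lee_fin.
  rewrite -!msum_int //; apply: eq_measure_integral => A mA _.
  rewrite [LHS](msum_set mx A1 A) [RHS](msum_set mx A2 A).
  rewrite (eq_bigr (fun x => (fine (mx x A))%:E)); last by move=> x _; rewrite -mu_fin.
  rewrite [RHS](eq_bigr (fun x => (fine (mx x A))%:E)); last by move=> x _; rewrite -mu_fin.
  by rewrite !sumEFin hset.
move=> f g; have [mf [C hC]] := g.
have g' : good (fun l => f l + C).
  split; first by apply: measurable_realfun.measurable_funD => //; exact: measurable_cst.
  by exists (C + `|C|) => l; apply: le_trans (ler_normD _ _) _; apply: lerD.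
have hB : forall B : pred T, \sum_(x | B x) Vi (mx x) (fun l => f l + C) = \sum_(x | B x) Vi (mx x) f + \sum_(x | B x) C.
  by move=> B; rewrite -big_split; apply: eq_bigr => x _; rewrite Vi_addc.
have hc : \sum_(x | A1 x) C = \sum_(x | A2 x) C.
  have := hset _ measurableT.
  under eq_bigr do rewrite probability_setT.
  under [X in _ = X -> _]eq_bigr do rewrite probability_setT.
  by move=> h; rewrite -[C]mul1r -!mulr_suml /= h.
have := hpos _ g'; rewrite !hB hc => h; apply: (addIr (\sum_(x | A2 x) C)); rewrite h //.
move=> l; rewrite -lerBlDr sub0r; have := hC l; rewrite ler_norml; by case/andP.
Qed.
Definition eb n (i : 'I_n) : {ffun 'I_n -> bool} := [ffun j => j == i].
Definition zb n : {ffun 'I_n -> bool} := [ffun => false].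

Lemma sum_two n (s : {ffun 'I_n -> bool}) i j : i != j -> s i -> s j ->
  (2 <= \sum_(k < n) (s k : nat))%N.
Proof.
move=> ij si sj; rewrite (bigD1 i) //= (bigD1 j) /=; last by rewrite eq_sym.
by rewrite si sj; lia.
Qed.

Lemma nonpar_sum (V : nmodType) n (F : {ffun 'I_n -> bool} -> V) :
  \sum_(s | ~~ in_Par s) F s = F (zb n) + \sum_(i < n) F (eb i).
Proof.
rewrite (bigD1 (zb n)) /=; last first.
  by rewrite /in_Par big1 // => i _; rewrite ffunE.
congr (_ + _).
have inj : injective (@eb n).
  by move=> i j /ffunP /(_ i); rewrite !ffunE eqxx => /esym /eqP.
rewrite -(big_imset _ (in2W inj)) /=.
apply: eq_bigl => s; apply/andP/imsetP.
  move=> [hp hz].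
  have [i si] : exists i, s i.
    apply/existsP; apply: contraR hz => /existsPn h.
    by apply/eqP/ffunP => j; rewrite ffunE; apply/negbTE.
  exists i => //; apply/ffunP => j; rewrite ffunE.
  case: eqVneq => [-> //|ji]; apply/negbTE; apply/negP => sj.
  by move: hp; rewrite /in_Par (sum_two ji sj si).
move=> [i _ ->]; split.
  rewrite /in_Par (bigD1 i) //= ffunE eqxx big1 // => j ji.
  by rewrite ffunE (negbTE ji).
by apply/eqP => /ffunP /(_ i); rewrite !ffunE eqxx.
Qed.

Lemma parity_zb n (x : {ffun 'I_n -> bool}) : parity x (zb n) = false.
Proof. by rewrite /parity big1 // => i _; rewrite ffunE andbF. Qed.

Lemma parity_eb n (x : {ffun 'I_n -> bool}) i : parity x (eb i) = x i.
Proof.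
rewrite /parity (bigD1 i) //= ffunE eqxx andbT big1 ?addbF // => j ji.
by rewrite ffunE (negbTE ji) andbF.
Qed.

Lemma sign_parity (R : ringType) n (x s : {ffun 'I_n -> bool}) :
  \prod_i ((-1) ^+ (x i && s i) : R) = (-1) ^+ parity x s.
Proof.
rewrite /parity; apply/esym/(big_morph (fun b : bool => (-1) ^+ b : R)) => //.
by move=> a b; rewrite signr_addb.
Qed.

Lemma expand (R : comRingType) n (x : {ffun 'I_n -> bool}) (h : 'I_n -> R) :
  \prod_i (1 - (-1) ^+ (x i) * h i) =
  \sum_(s : {ffun 'I_n -> bool}) (-1) ^+ (parity x s) * \prod_i (if s i then - h i else 1).
Proof.
transitivity (\prod_i \sum_(b : bool) (if b then - ((-1) ^+ (x i) * h i) else 1)).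
  by apply: eq_bigr => i _; rewrite big_bool /= addrC.
rewrite bigA_distr_bigA; apply: eq_bigr => s _.
rewrite -sign_parity -big_split; apply: eq_bigr => i _ /=.
by case: (s i); case: (x i); rewrite /= ?expr0 ?expr1 ?mulN1r ?mul1r ?opprK.
Qed.

Lemma Vi_scale (R : realType) (d : measure_display) (L : measurableType d)
  (m : probability L R) (f : L -> R) c : good f ->
  Vi m (fun l => c * f l) = c * Vi m f.
Proof.
move=> g.
have -> : (fun l => c * f l) = (fun l => \sum_(b <- [:: tt]) c * (fun _ => f) b l).
  by apply: funext => l; rewrite big_seq1.
by rewrite Vi_sum // big_seq1.
Qed.

Lemma good_prod (R : realType) (d : measure_display) (L : measurableType d)
  (I : Type) (r : seq I) (F : I -> L -> R) :
  (forall i, measurable_fun setT (F i)) -> (forall i l, `|F i l| <= 1) ->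
  good (fun l => \prod_(i <- r) F i l).
Proof.
move=> mF bF; split.
  elim: r => [|i r ih]; first by under eq_fun do rewrite big_nil; exact: measurable_cst.
  under eq_fun do rewrite big_cons.
  exact: measurable_funM.
exists 1 => l; elim: r => [|i r ih]; first by rewrite big_nil normr1.
rewrite big_cons normrM -[X in _ <= X]mulr1; apply: ler_pM => //.
Qed.

Lemma sum_out (R : nmodType) (O : finType) (lab : O -> bool) (g : bool -> O)
  (c1 : cancel lab g) (c2 : cancel g lab) (F : O -> R) :
  \sum_k F k = F (g true) + F (g false).
Proof.
rewrite (reindex g) /=; first by rewrite big_bool.
by apply: onW_bij; exists lab.
Qed.

Lemma sum_out_cond (R : nmodType) (O : finType) (lab : O -> bool) (g : bool -> O)
  (c1 : cancel lab g) (c2 : cancel g lab) (F : O -> R) b :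
  \sum_(k | lab k == b) F k = F (g b).
Proof.
rewrite (reindex g) /=; last by apply: onW_bij; exists lab.
by rewrite (eq_bigl (pred1 b)) ?big_pred1_eq // => b'; rewrite /= c2.
Qed.

Theorem theorem1 (R : realType) (Th : opTheory R)
    (d : measure_display) (L : measurableType d)
    (mu : prep Th -> probability L R)
    (resp : forall M : meas Th, outcome M -> L -> R)
    (Hmodel : hv_model mu resp)
    (Hpnc : prep_noncontextual mu)
    (n : nat) (Hn : (1 <= n)%N)
    (P : {ffun 'I_n -> bool} -> prep Th)
    (M : 'I_n -> meas Th)
    (lab : forall y : 'I_n, outcome (M y) -> bool)
    (Hbin : forall y : 'I_n, bijective (lab y))
    (Hpo : forall s : {ffun 'I_n -> bool}, in_Par s ->
       forall (N : meas Th) (k : outcome N),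
         \sum_(x : {ffun 'I_n -> bool} | ~~ parity x s) prob (P x) N k
         = \sum_(x : {ffun 'I_n -> bool} | parity x s) prob (P x) N k) :
  (2 ^+ n * n%:R)^-1 *
    \sum_(y < n) \sum_(x : {ffun 'I_n -> bool}) succ_prob P lab x y
  <= (n%:R + 1) / (2 * n%:R).
Proof.
have [Hmeas Hge0 Hsum1 Hint Hmix] := Hmodel.
pose V x f := Vi (mu (P x)) f.
have HA : forall s, in_Par s -> forall f, good f ->
    \sum_(x | ~~ parity x s) V x f = \sum_(x | parity x s) V x f.
  move=> s sP f gf.
  apply: (mix_int (mx := fun x => mu (P x))) => //.
  apply: (@mix_sets _ _ _ _ _ _ Hmodel Hpnc _ P _ _ (zb n) (M (Ordinal Hn))).
    by rewrite /parity big1 // => i _; rewrite ffunE.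
  exact: Hpo.
have inv : forall y, {g : bool -> outcome (M y) | cancel (lab y) g /\ cancel g (lab y)}.
  by move=> y; apply: cid; case: (Hbin y) => g h1 h2; exists g.
pose kk y b := proj1_sig (inv y) b.
have c1 y : cancel (lab y) (kk y) by case: (proj2_sig (inv y)).
have c2 y : cancel (kk y) (lab y) by case: (proj2_sig (inv y)).
pose a y b := resp (M y) (kk y b).
have hab y l : a y true l + a y false l = 1.
  by rewrite /a -(sum_out (c1 y) (c2 y) (fun k => resp (M y) k l)) Hsum1.
have ha0 y b l : 0 <= a y b l by exact: Hge0.
pose h y l := a y false l - a y true l.
have hgood y : good (h y).
  split; first by apply: measurable_funB; exact: Hmeas.
  exists 1 => l; have := hab y l; have := ha0 y true l; have := ha0 y false l.
  rewrite /h; move: (a y true l) (a y false l) => p q; rewrite ler_norml => h1 h2 h3; apply/andP; split; lra.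
have habs y l : `|h y l| <= 1.
  have := hab y l; have := ha0 y true l; have := ha0 y false l.
  rewrite /h; move: (a y true l) (a y false l) => p q; rewrite ler_norml => h1 h2 h3; apply/andP; split; lra.
have succE x y : succ_prob P lab x y = (-1) ^+ (x y) / 2 * V x (h y) + 2^-1.
  rewrite /succ_prob (sum_out_cond (c1 y) (c2 y) (fun k => prob (P x) (M y) k)).
  have -> : prob (P x) (M y) (kk y (x y)) = V x (a y (x y)).
    by rewrite /V /Vi -Hint.
  have -> : a y (x y) = (fun l => (-1) ^+ (x y) / 2 * h y l + 2^-1).
    apply: funext => l; have := hab y l; rewrite /h.
    case: (x y); move: (a y true l) (a y false l) => p q /=; rewrite ?expr0 ?expr1 => *; lra.
  by rewrite /V Vi_addc ?Vi_scale //; exact: good_scale.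
pose D := \sum_(y < n) \sum_(x : {ffun 'I_n -> bool}) (-1) ^+ (x y) * V x (h y).
pose K : R := \sum_(x : {ffun 'I_n -> bool}) 1.
have Sdef : \sum_(y < n) \sum_(x : {ffun 'I_n -> bool}) succ_prob P lab x y = D / 2 + n%:R * K / 2.
  under eq_bigr do under eq_bigr do rewrite succE.
  under eq_bigr do rewrite big_split /=.
  rewrite big_split /=; congr (_ + _).
    rewrite /D mulr_suml; apply: eq_bigr => y _; rewrite mulr_suml.
    by apply: eq_bigr => x _; rewrite mulrAC.
  have -> : \sum_(x : {ffun 'I_n -> bool}) (2^-1 : R) = K / 2.
    by rewrite /K mulr_suml; apply: eq_bigr => *; rewrite mul1r.
  rewrite sumr_const card_ord; ring.
pose H (s : {ffun 'I_n -> bool}) l := \prod_i (if s i then - h i l else 1).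
have Hgood s : good (H s).
  apply: good_prod => i; first by case: (s i); [apply: measurableT_comp | exact: measurable_cst]; case: (hgood i).
  by move=> l; case: (s i); rewrite ?normrN ?normr1.
have DK : D <= K.
  have pos : 0 <= \sum_x V x (fun l => \prod_i (1 - (-1) ^+ (x i) * h i l)).
    apply: sumr_ge0 => x _; apply: Vi_ge0 => l; apply: prodr_ge0 => i _.
    rewrite subr_ge0; apply: le_trans (ler_norm _) _; by rewrite normrM normr_sign mul1r.
  have exp x : V x (fun l => \prod_i (1 - (-1) ^+ (x i) * h i l)) =
      \sum_s (-1) ^+ (parity x s) * V x (H s).
    have -> : (fun l => \prod_i (1 - (-1) ^+ (x i) * h i l)) =
        (fun l => \sum_s (-1) ^+ (parity x s) * H s l).
      by apply: funext => l; rewrite expand.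
    by rewrite /V Vi_sum.
  move: pos; under eq_bigr do rewrite exp.
  rewrite exchange_big /= (bigID (@in_Par n)) /= big1 ?add0r; last first.
    move=> s sP; rewrite (bigID (fun x => parity x s)) /=.
    under eq_bigr => x -> do rewrite expr1 mulN1r.
    under [X in _ + X]eq_bigr => x /negbTE -> do rewrite expr0 mul1r.
    by rewrite sumrN HA // addNr.
  rewrite nonpar_sum.
  have -> : H (zb n) = fun _ => 1.
    by apply: funext => l; rewrite /H big1 // => i _; rewrite ffunE.
  under eq_bigr do rewrite parity_zb expr0 mul1r /V Vi_cst.
  have He i : H (eb i) = fun l => (-1) * h i l.
    apply: funext => l; rewrite /H (bigD1 i) //= ffunE eqxx big1 ?mulr1 ?mulN1r //.
    by move=> j ji; rewrite ffunE (negbTE ji).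
  under [X in _ + X]eq_bigr do under eq_bigr do rewrite parity_eb He /V Vi_scale // mulN1r mulrN.
  by rewrite -/K; under [X in _ + X]eq_bigr do rewrite sumrN; rewrite sumrN subr_ge0.
have Kval : K = 2 ^+ n.
  by rewrite /K sumr_const card_ffun card_bool card_ord natrX.
have n0 : 0 < n%:R :> R by rewrite ltr0n.
rewrite Sdef -Kval.
have K0 : 0 < K by rewrite Kval exprn_gt0.
apply: (@le_trans _ _ ((K * n%:R)^-1 * (K / 2 + n%:R * K / 2))).
  apply: ler_wpM2l; first by rewrite invr_ge0 mulr_ge0 // ltW.
  by rewrite lerD2r ler_pM2r.
rewrite le_eqVlt; apply/orP; left; apply/eqP; field.
by rewrite gt_eqF // gt_eqF.
Qed.
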